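(* Let $f,g$ be polynomials in $L,M$ and $\hat f,\hat g$ polynomials in $\hat L,\hat M$. Then $$\{f\hat f,g\hat g\}=[f,g]\hat f\hat g-fg[\hat f,\hat g],\qquad \{\hat f f,\hat g g\}=\hat f\hat g[f,g]-[\hat f,\hat g]fg,$$ $$\{f\hat f,\hat g g\}=[f,\hat g][g,\hat f]-f[\hat f,\hat g]g+\hat g[f,g]\hat f.$$
   Context: Setting: the two-component BKP hierarchy. $D=d/dx$; pseudo-differential operators multiply via $D^i f=\sum_{r\ge0}\binom{i}{r}D^r(f)D^{i-r}$; $A_+$ and $A_-$ denote the parts of $A=\sum f_iD^i$ with $i\ge0$ and $i<0$. Dressing operators $\Phi=1+\sum_{i\ge1}a_iD^{-i}$, $\hat\Phi=1+\sum_{i\ge1}b_iD^i$ (with $\Phi^*=D\Phi^{-1}D^{-1}$, $\hat\Phi^*=D\hat\Phi^{-1}D^{-1}$, where $(\sum f_iD^i)^*=\sum(-D)^if_i$); Lax operators $L=\Phi D\Phi^{-1}$, $\hat L=\hat\Phi D^{-1}\hat\Phi^{-1}$; Orlov–Schulman operators $M=\Phi\Gamma\Phi^{-1}$, $\hat M=\hat\Phi\hat\Gamma\hat\Phi^{-1}$ with $\Gamma=\sum_{k\ \mathrm{odd}}kt_kD^{k-1}$, $\hat\Gamma=x+\sum_{k\ \mathrm{odd}}k\hat t_kD^{-k-1}$ ($t_1=x$). For an operator $A=A(L,\hat L^{-1},M,\hat M)$, $Y_A$ denotes the derivation defined by $Y_A\Phi=-A_-\Phi$, $Y_A\hat\Phi=A_+\hat\Phi$,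 so that $Y_AL=[-A_-,L]$, $Y_AM=[-A_-,M]$, $Y_A\hat L=[A_+,\hat L]$, $Y_A\hat M=[A_+,\hat M]$, extended to products of $L,\hat L,M,\hat M$ by the Leibniz rule. The bracket is $\{A,B\}=-Y_AB+Y_BA-[A_-,B_-]+[A_+,B_+]$. *)

(* Defs.v *)
From HB Require Import structures.
From mathcomp Require Import all_boot all_order all_algebra.
Set Implicit Arguments. Unset Strict Implicit. Unset Printing Implicit Defensive.
Import GRing.Theory.
Local Open Scope ring_scope.

Inductive pexpr (K : Type) : Type :=
| PL | PM | PLh | PMh
| PC of K
| PAdd of pexpr K & pexpr K
| PMul of pexpr K & pexpr K.
Arguments PL {K}. Arguments PM {K}. Arguments PLh {K}. Arguments PMh {K}.

Fixpoint is_polyLM {K} (e : pexpr K) : bool :=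
  match e with
  | PL | PM | PC _ => true
  | PLh | PMh => false
  | PAdd a b | PMul a b => is_polyLM a && is_polyLM b
  end.

Fixpoint is_polyLMh {K} (e : pexpr K) : bool :=
  match e with
  | PLh | PMh | PC _ => true
  | PL | PM => false
  | PAdd a b | PMul a b => is_polyLMh a && is_polyLMh b
  end.

Section Ops.
Variables (K : comNzRingType) (R : algType K).
(* the operator algebra, the projections A |-> A_+ and A |-> A_-,
   and the operators L, M, \hat L, \hat M *)
Variables (pplus pminus : R -> R) (L M Lh Mh : R).

Definition comm (x y : R) : R := x * y - y * x.

Fixpoint peval (e : pexpr K) : R :=
  match e with
  | PL => L | PM => M | PLh => Lh | PMh => Mh
  | PC c => c%:A
  | PAdd a b => peval a + peval b
  | PMul a b => peval a * peval b
  end.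

Fixpoint Yder (A : R) (e : pexpr K) : R :=
  match e with
  | PL => comm (- pminus A) L
  | PM => comm (- pminus A) M
  | PLh => comm (pplus A) Lh
  | PMh => comm (pplus A) Mh
  | PC _ => 0
  | PAdd a b => Yder A a + Yder A b
  | PMul a b => Yder A a * peval b + peval a * Yder A b
  end.

Definition pbracket (a b : pexpr K) : R :=
  let A := peval a in let B := peval b in
  - Yder A b + Yder B a - comm (pminus A) (pminus B)
  + comm (pplus A) (pplus B).

End Ops.

(* Main.v *)
Require Import Defs.
From HB Require Import structures.
From mathcomp Require Import all_boot all_order all_algebra.
Import GRing.Theory.
Local Open Scope ring_scope.

Section S.
Variables (K : comNzRingType) (R : algType K).

Lemma commD (x y z : R) : comm x (y + z) = comm x y + comm x z.
Proof. by rewrite /comm mulrDl mulrDr opprD addrACA. Qed.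
Lemma commM (x y z : R) : comm x (y * z) = comm x y * z + y * comm x z.
Proof. rewrite /comm mulrBl mulrBr !mulrA addrA subrK //. Qed.
Lemma commC (x : R) c : comm x (c%:A) = 0.
Proof. by rewrite /comm mulr_algr mulr_algl subrr. Qed.

Variables (pplus pminus : R -> R) (L M Lh Mh : R).

Lemma YLM (A : R) e (h : is_polyLM e) : Yder pplus pminus L M Lh Mh A e = comm (- pminus A) (peval L M Lh Mh e).
Proof.
move: h; elim: e => //= [c|a IHa b IHb /andP[ha hb]|a IHa b IHb /andP[ha hb]].
- by rewrite commC.
- by rewrite IHa // IHb // commD.
- by rewrite IHa // IHb // commM.
Qed.
Lemma YLMh (A : R) e (h : is_polyLMh e) : Yder pplus pminus L M Lh Mh A e = comm (pplus A) (peval L M Lh Mh e).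
Proof.
move: h; elim: e => //= [c|a IHa b IHb /andP[ha hb]|a IHa b IHb /andP[ha hb]].
- by rewrite commC.
- by rewrite IHa // IHb // commD.
- by rewrite IHa // IHb // commM.
Qed.
End S.

Ltac pull t := repeat progress rewrite ?(addrCA _ t).
Ltac acnorm := apply/eqP; rewrite -subr_eq0; apply/eqP;
  rewrite ?(mulrDl, mulrDr, mulrBl, mulrBr, mulNr, mulrN, opprD, opprK, opprB, mulrA, addrA);
  rewrite -[LHS]addr0 -?addrA.
Ltac cancel := repeat match goal with
  | |- context [ - ?t ] => pull (- t); pull t; rewrite addNKr
  end.

Theorem lemma3p3 (K : comNzRingType) (R : algType K)
  (pplus pminus : R -> R) (L M Lh Mh : R)
  (pplus_add : forall x y, pplus (x + y) = pplus x + pplus y)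
  (pminus_add : forall x y, pminus (x + y) = pminus x + pminus y)
  (split_pm : forall x, pplus x + pminus x = x)
  (f g fh gh : pexpr K)
  (hf : is_polyLM f) (hg : is_polyLM g)
  (hfh : is_polyLMh fh) (hgh : is_polyLMh gh) :
  let ev := peval L M Lh Mh in
  let br := pbracket pplus pminus L M Lh Mh in
  let c := @comm K R in
  [/\ br (PMul f fh) (PMul g gh)
        = c (ev f) (ev g) * ev fh * ev gh - ev f * ev g * c (ev fh) (ev gh),
      br (PMul fh f) (PMul gh g)
        = ev fh * ev gh * c (ev f) (ev g) - c (ev fh) (ev gh) * ev f * ev g
    & br (PMul f fh) (PMul gh g)
        = c (ev f) (ev gh) * c (ev g) (ev fh) - ev f * c (ev fh) (ev gh) * ev g
          + ev gh * c (ev f) (ev g) * ev fh].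
Proof.
have pp x : pplus x = x - pminus x by apply/eqP; rewrite eq_sym subr_eq split_pm.
rewrite /pbracket /=.
rewrite !(@YLM _ _ _ _ _ _ _ _ _ _ hf, @YLM _ _ _ _ _ _ _ _ _ _ hg, @YLMh _ _ _ _ _ _ _ _ _ _ hfh, @YLMh _ _ _ _ _ _ _ _ _ _ hgh) !pp.
set ef := peval _ _ _ _ f; set eg := peval _ _ _ _ g;
set efh := peval _ _ _ _ fh; set egh := peval _ _ _ _ gh.
split; rewrite /comm.
- move: (pminus (ef * efh)) (pminus (eg * egh)) => a b.
  by acnorm; cancel.
- move: (pminus (efh * ef)) (pminus (egh * eg)) => a b.
  by acnorm; cancel.
- move: (pminus (ef * efh)) (pminus (egh * eg)) => a b.
  by acnorm; cancel.
Qed.
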